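(* In a node-weighted MFQST with Steiner point cost $c>0$, every edge $e$ satisfies $|e|\le\sqrt{2c/f(e)}$, where $f(e)$ is the flow on $e$.
   Context: Let $Z=\{z_1,\dots,z_n\}\subset\mathbb{R}^2$ ($n\ge 1$) be a set of sources and $z_{BS}\in\mathbb{R}^2\setminus Z$ a sink; each source has supply $1$. A flow-dependent quadratic Steiner tree (FQST) consists of a finite set $S\subset\mathbb{R}^2$ of Steiner points and a tree $T$ with vertex set $Z\cup S\cup\{z_{BS}\}$ whose edges are directed towards $z_{BS}$. Every node other than the sink has exactly one out-edge, and the sink has none. Each edge $e$ carries a positive flow $f(e)$ such that: - at each source, the flow on its out-edge minus the total flow on its in-edges equals $1$; - at each Steiner point, the out-flow equals the total in-flow; - the sink receives total flow $n$. The cost is $L(T)=\sum_{e\in E(T)} f(e)|e|^2$. For a fixed $c>0$, a node-weighted MFQST is an FQST minimising $L_c(T)=L(T)+c|S|$ over all FQSTs (any finite $S$, any topology). *)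

(* Defs.v *)
(* points of the plane are pairs over a real closed field R
   (the statement is proved for every rcfType, in particular covers R^2). *)
From HB Require Import structures.
From mathcomp Require Import all_boot all_order all_algebra.
Set Implicit Arguments. Unset Strict Implicit. Unset Printing Implicit Defensive.
Import Order.TTheory GRing.Theory Num.Theory.
Local Open Scope ring_scope.

Definition point (R : rcfType) := (R * R)%type.

Definition sqdist (R : rcfType) (p q : point R) : R :=
  (p.1 - q.1) ^+ 2 + (p.2 - q.2) ^+ 2.
Definition dist (R : rcfType) (p q : point R) : R := Num.sqrt (sqdist p q).

(* Non-sink nodes of a tree with n sources and m Steiner points:
   inl i = source z_i, inr j = Steiner point s_j.
   All nodes: option of these, None = the sink z_BS. *)
Definition vtx (n m : nat) := ('I_n + 'I_m)%type.

(* Each non-sink node v has exactly one out-edge, to [par v]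
   (None = sink); the sink has no out-edge.  [flow v] is the flow on the
   out-edge of v. *)
Record FQST (R : rcfType) (n : nat) (z : 'I_n -> point R) (zBS : point R) := {
  nst : nat;
  spt : 'I_nst -> point R;
  par : vtx n nst -> option (vtx n nst);
  flow : vtx n nst -> R;
  spt_inj : injective spt;
  spt_notZ : forall j i, spt j != z i;
  spt_notBS : forall j, spt j != zBS;
  (* edges directed towards the sink: T is a tree rooted at the sink *)
  par_tree : forall v, exists k, iter k (obind par) (Some v) = None;
  flow_pos : forall v, 0 < flow v;
  flow_src : forall i : 'I_n,
    flow (inl i) - \sum_(u : vtx n nst | par u == Some (inl i)) flow u = 1;
  flow_stp : forall j : 'I_nst,
    flow (inr j) = \sum_(u : vtx n nst | par u == Some (inr j)) flow u;
  flow_sink : \sum_(u : vtx n nst | par u == None) flow u = n%:R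
}.

Arguments nst {R n z zBS} _.
Arguments spt {R n z zBS} _ _.
Arguments par {R n z zBS} _ _.
Arguments flow {R n z zBS} _ _.

Section FQSTdefs.
Context {R : rcfType} {n : nat} {z : 'I_n -> point R} {zBS : point R}.

Definition npos (T : FQST z zBS) (v : option (vtx n (nst T))) : point R :=
  match v with
  | None => zBS
  | Some (inl i) => z i
  | Some (inr j) => spt T j
  end.
Arguments npos : clear implicits.
Arguments npos T v.

Definition costL (T : FQST z zBS) : R :=
  \sum_(v : vtx n (nst T)) flow T v * sqdist (npos T (Some v)) (npos T (par T v)).

Definition costLc (c : R) (T : FQST z zBS) : R := costL T + c * (nst T)%:R.

Definition isMFQST (c : R) (T : FQST z zBS) : Prop :=
  forall T' : FQST z zBS, costLc c T <= costLc c T'.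
End FQSTdefs.
Arguments npos {R n z zBS} T v.
Arguments costL {R n z zBS} T.
Arguments costLc {R n z zBS} c T.
Arguments isMFQST {R n z zBS} c T.

(* Main.v *)
Require Import Defs.
From HB Require Import structures.
From mathcomp Require Import all_boot all_order all_algebra.
From mathcomp Require Import ring lra.
Import Order.TTheory GRing.Theory Num.Theory.
Local Open Scope ring_scope.
Set Implicit Arguments. Unset Strict Implicit. Unset Printing Implicit Defensive.

Section Insert.
Variables (R : rcfType) (n : nat) (z : 'I_n -> point R) (zBS : point R).
Variable T : FQST z zBS.
Local Notation m := (nst T).
Variable v : vtx n m.
Variable p : point R.
Hypothesis hp : forall w : option (vtx n m), p != npos T w.

Definition emb (u : vtx n m) : vtx n m.+1 :=
  match u with inl i => inl i | inr j => inr (lift ord_max j) end.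
Definition newv : vtx n m.+1 := inr ord_max.
Definition dec (w : vtx n m.+1) : option (vtx n m) :=
  match w with inl i => Some (inl i) | inr j => omap inr (unlift ord_max j) end.

Lemma decK u : dec (emb u) = Some u.
Proof. by case: u => //= j; rewrite liftK. Qed.

Lemma dec_None w : dec w = None -> w = newv.
Proof. by case: w => //= j; case: unliftP => //= ->. Qed.

Lemma dec_Some w u : dec w = Some u -> w = emb u.
Proof. case: w => /= [i [<-]|j] //; case: unliftP => //= j' -> [<-] //. Qed.

Lemma emb_inj : injective emb.
Proof. exact: pcan_inj decK. Qed.

Lemma emb_newv u : (emb u == newv) = false.
Proof. apply/negbTE/eqP => h; have := decK u; by rewrite h /newv /= unlift_none. Qed.

Lemma omap_emb_eq (a b : option (vtx n m)) : (omap emb a == omap emb b) = (a == b).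
Proof.
case: a => [x|]; case: b => [y|] //=.
by rewrite !(inj_eq (@Some_inj _)) (inj_eq emb_inj).
Qed.

Lemma omap_emb_new (a : option (vtx n m)) : (omap emb a == Some newv) = false.
Proof. by case: a => //= x; rewrite (inj_eq (@Some_inj _)) emb_newv. Qed.

Definition spt' (j : 'I_m.+1) : point R :=
  match unlift ord_max j with Some j' => spt T j' | None => p end.
Definition par' (w : vtx n m.+1) : option (vtx n m.+1) :=
  match dec w with None => omap emb (par T v)
  | Some u => if u == v then Some newv else omap emb (par T u) end.
Definition flow' (w : vtx n m.+1) : R :=
  match dec w with None => flow T v | Some u => flow T u end.

Lemma sum_split (G : vtx n m.+1 -> R) :
  \sum_w G w = \sum_u G (emb u) + G newv.
Proof.
rewrite !big_sumType /= big_ord_recr /= addrA; congr (_ + _ + _).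
apply: eq_bigr => j _; congr (G (inr _)); apply: val_inj.
by rewrite /= /bump leqNgt ltn_ord.
Qed.

Lemma dec_newv : dec newv = None.
Proof. by rewrite /= unlift_none. Qed.

Lemma par'_emb u : par' (emb u) = if u == v then Some newv else omap emb (par T u).
Proof. by rewrite /par' decK. Qed.
Lemma par'_newv : par' newv = omap emb (par T v).
Proof. by rewrite /par' dec_newv. Qed.
Lemma flow'_emb u : flow' (emb u) = flow T u.
Proof. by rewrite /flow' decK. Qed.
Lemma flow'_newv : flow' newv = flow T v.
Proof. by rewrite /flow' dec_newv. Qed.

Lemma spt'_inj : injective spt'.
Proof.
move=> j1 j2; rewrite /spt'.
case: unliftP => [j1' ->|->]; case: unliftP => [j2' ->|->] //.
- by move/spt_inj ->.
- by move=> h; have := hp (Some (inr j1')); rewrite /= h eqxx.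
- by move=> h; have := hp (Some (inr j2')); rewrite /= h eqxx.
Qed.

Lemma spt'_notZ j i : spt' j != z i.
Proof.
rewrite /spt'; case: unliftP => [j' _|_]; first exact: spt_notZ.
exact: (hp (Some (inl i))).
Qed.

Lemma spt'_notBS j : spt' j != zBS.
Proof.
rewrite /spt'; case: unliftP => [j' _|_]; first exact: spt_notBS.
exact: (hp None).
Qed.

Lemma par_tree_aux k : forall x, iter k (obind (par T)) x = None ->
  exists k', iter k' (obind par') (omap emb x) = None.
Proof.
elim: k => [|k IH] x; first by move=> /= ->; exists 0%N.
case: x => [u|]; last by move=> _; exists 0%N.
rewrite iterSr /= => /IH [k' hk].
case: (eqVneq u v) => [e|huv].
- subst u.
  exists k'.+2; rewrite !iterSr /= par'_emb eqxx /= par'_newv. exact: hk.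
- exists k'.+1; rewrite iterSr /= par'_emb (negbTE huv). exact: hk.
Qed.

Lemma par'_tree w : exists k, iter k (obind par') (Some w) = None.
Proof.
case hw: (dec w) => [u|].
- rewrite (dec_Some hw); have [k hk] := par_tree u.
  exact: (par_tree_aux hk).
- rewrite (dec_None hw); have [[|k] hk] := par_tree v; first by [].
  rewrite iterSr /= in hk.
  have [k' hk'] := par_tree_aux hk.
  by exists k'.+1; rewrite iterSr /= par'_newv.
Qed.

Lemma flow'_pos w : 0 < flow' w.
Proof. by rewrite /flow'; case: (dec w) => [u|]; apply: flow_pos. Qed.

Lemma sum_par' (y : option (vtx n m)) :
  \sum_(w | par' w == omap emb y) flow' w = \sum_(u | par T u == y) flow T u.
Proof.
rewrite big_mkcond sum_split /= par'_newv omap_emb_eq flow'_newv.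
rewrite [RHS]big_mkcond [RHS](bigD1 v) //= [in LHS](bigD1 v) //=.
rewrite par'_emb eqxx [Some newv == _]eq_sym omap_emb_new add0r addrC; congr (_ + _).
apply: eq_bigr => u huv; rewrite par'_emb (negbTE huv) omap_emb_eq flow'_emb //.
Qed.

Lemma sum_par'_new : \sum_(w | par' w == Some newv) flow' w = flow T v.
Proof.
rewrite big_mkcond sum_split /= par'_newv omap_emb_new addr0.
rewrite (eq_bigr (fun u => if u == v then flow T u else 0)).
  by rewrite -big_mkcond big_pred1_eq.
move=> u _; rewrite par'_emb flow'_emb; case: (u == v); first by rewrite eqxx.
by rewrite omap_emb_new.
Qed.

Definition T' : FQST z zBS.
refine (@Build_FQST R n z zBS m.+1 spt' par' flow' spt'_inj spt'_notZ spt'_notBS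
  par'_tree flow'_pos _ _ _).
- move=> i; change (Some (inl i) : option (vtx n m.+1)) with (omap emb (Some (inl i))).
  rewrite sum_par'; change (flow' (inl i)) with (flow' (emb (inl i))).
  rewrite flow'_emb; exact: flow_src.
- move=> j; case: (unliftP ord_max j) => [j' ->|->].
  + change (Some (inr (lift ord_max j')) : option (vtx n m.+1)) with (omap emb (Some (inr j'))).
    rewrite sum_par'; change (flow' (inr (lift ord_max j'))) with (flow' (emb (inr j'))).
    rewrite flow'_emb; exact: flow_stp.
  + by rewrite sum_par'_new flow'_newv.
- change (None : option (vtx n m.+1)) with (omap emb (@None (vtx n m))).
  rewrite sum_par'; exact: flow_sink.
Defined.

Lemma npos_emb u : npos T' (Some (emb u)) = npos T (Some u).
Proof. by case: u => //= j; rewrite /spt' liftK. Qed.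
Lemma npos_omap x : npos T' (omap emb x) = npos T x.
Proof. by case: x => [u|] //; exact: npos_emb. Qed.
Lemma npos_new : npos T' (Some newv) = p.
Proof. by rewrite /= /spt' unlift_none. Qed.

Lemma costL_T' : costL T' = costL T + flow T v *
  (sqdist (npos T (Some v)) p + sqdist p (npos T (par T v))
   - sqdist (npos T (Some v)) (npos T (par T v))).
Proof.
change (costL T') with
  (\sum_(w : vtx n m.+1) flow' w * sqdist (npos T' (Some w)) (npos T' (par' w))).
rewrite sum_split flow'_newv par'_newv npos_new npos_omap.
set G := fun u => flow T u * sqdist (npos T (Some u)) (npos T (par T u)).
have -> : \sum_u flow' (emb u) * sqdist (npos T' (Some (emb u))) (npos T' (par' (emb u)))
  = \sum_u (if u == v then flow T v * sqdist (npos T (Some v)) p else G u).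
  apply: eq_bigr => u _; rewrite par'_emb flow'_emb npos_emb.
  case: eqVneq => [->|_]; first by rewrite npos_new.
  by rewrite npos_omap.
rewrite /costL -/G (bigD1 v) // eqxx [in RHS](bigD1 v) //.
rewrite (eq_bigr G); last by move=> u /negbTE ->.
rewrite /G; set S := \big[_/_]_(i | _) _; rewrite /=; ring.
Qed.

Lemma nst_T' : nst T' = m.+1. Proof. by []. Qed.

End Insert.

Definition pt (R : rcfType) (a b : point R) (s : R) : point R :=
  (a.1 + (2^-1 + s) * (b.1 - a.1), a.2 + (2^-1 + s) * (b.2 - a.2)).

Lemma pt_inj (R : rcfType) (a b : point R) s1 s2 :
  0 < sqdist a b -> pt a b s1 = pt a b s2 -> s1 = s2.
Proof.
rewrite /sqdist /pt => hD [/addrI h1 /addrI h2].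
have e1 : (s1 - s2) * (b.1 - a.1) = 0.
  have -> : (s1 - s2) * (b.1 - a.1) = (2^-1 + s1) * (b.1 - a.1) - (2^-1 + s2) * (b.1 - a.1) by ring.
  by rewrite h1 subrr.
have e2 : (s1 - s2) * (b.2 - a.2) = 0.
  have -> : (s1 - s2) * (b.2 - a.2) = (2^-1 + s1) * (b.2 - a.2) - (2^-1 + s2) * (b.2 - a.2) by ring.
  by rewrite h2 subrr.
have : (s1 - s2) ^+ 2 * ((a.1 - b.1) ^+ 2 + (a.2 - b.2) ^+ 2) = 0.
  have -> : (s1 - s2) ^+ 2 * ((a.1 - b.1) ^+ 2 + (a.2 - b.2) ^+ 2) = ((s1 - s2) * (b.1 - a.1)) ^+ 2 + ((s1 - s2) * (b.2 - a.2)) ^+ 2 by ring.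
  by rewrite e1 e2 expr0n /= addr0.
move/eqP; rewrite mulf_eq0 (gt_eqF hD) orbF expf_eq0 /= subr_eq0.
by move/eqP.
Qed.

Lemma sqdist_pt1 (R : rcfType) (a b : point R) s :
  sqdist a (pt a b s) = (2^-1 + s) ^+ 2 * sqdist a b.
Proof. rewrite /sqdist /pt /=; ring. Qed.
Lemma sqdist_pt2 (R : rcfType) (a b : point R) s :
  sqdist (pt a b s) b = (2^-1 - s) ^+ 2 * sqdist a b.
Proof. by rewrite /sqdist /pt /=; field. Qed.

Lemma exists_good (R : rcfType) (F : finType) (P : F -> point R) (a b : point R) (r : R) :
  0 < sqdist a b -> 0 < r -> exists s, 0 < s <= r /\ forall w, pt a b s != P w.
Proof.
move=> hD hr.
pose sk (k : 'I_#|F|.+2) : R := r / (k.+1)%:R.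
have skpos k : 0 < sk k <= r.
  rewrite /sk divr_gt0 ?ltr0Sn //= ler_pdivrMr ?ltr0Sn //.
  by rewrite ler_peMr ?(ltW hr) // ler1n.
have sk_inj : injective sk.
  move=> k1 k2; rewrite /sk => /(mulfI (lt0r_neq0 hr)) /invr_inj /eqP.
  by rewrite eqr_nat eqSS => /eqP /val_inj.
case: (boolP [forall k, [exists w, pt a b (sk k) == P w]]) => [hall|].
  pose g k := [pick w | pt a b (sk k) == P w].
  have hg k : exists w, g k = Some w /\ pt a b (sk k) = P w.
    rewrite /g; case: pickP => [w /eqP hw|hn]; first by exists w.
    have /existsP [w hw] := forallP hall k.
    by rewrite hn in hw.
  have g_inj : injective g.
    move=> k1 k2 e; have [w1 [e1 h1]] := hg k1; have [w2 [e2 h2]] := hg k2.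
    move: e; rewrite e1 e2 => [[ew]]; apply: sk_inj; apply: (pt_inj hD).
    by rewrite h1 h2 ew.
  by have := leq_card _ g_inj; rewrite card_option card_ord ltnn.
rewrite negb_forall => /existsP [k]; rewrite negb_exists => /forallP hk.
by exists (sk k); split => // w; apply: hk.
Qed.

Lemma sqdist_ge0 (R : rcfType) (a b : point R) : 0 <= sqdist a b.
Proof. by rewrite /sqdist addr_ge0 // sqr_ge0. Qed.

Theorem mainTheorem14 (R : rcfType) (n : nat) (z : 'I_n -> point R)
  (zBS : point R) (c : R) :
  (0 < n)%N -> injective z -> (forall i, z i != zBS) -> 0 < c ->
  forall T : FQST z zBS, isMFQST c T ->
  forall v : vtx n (nst T),
    dist (npos T (Some v)) (npos T (par T v)) <= Num.sqrt (2 * c / flow T v).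
Proof.
move=> n0 zinj zne c0 T hmin v.
have f0 := flow_pos v.
rewrite /dist; apply: ler_wsqrtr; rewrite ler_pdivlMr //.
rewrite leNgt; apply/negP => hq.
have Dge0 := sqdist_ge0 (npos T (Some v)) (npos T (par T v)).
have hD : 0 < sqdist (npos T (Some v)) (npos T (par T v)) by nra.
set D := sqdist _ _ in hq Dge0 hD.
set f := flow T v in f0 hq.
pose q := D * f.
pose r := (q - 2 * c) / (4 * q).
have q0 : 0 < q by rewrite /q mulr_gt0.
have hrq : r * (4 * q) = q - 2 * c by rewrite /r mulfVK // mulf_neq0 // ?lt0r_neq0.
have hr : 0 < r by rewrite /r divr_gt0 ?mulr_gt0 // subr_gt0.
have [s [/andP [s0 sr] hs]] := exists_good (fun w => npos T w) hD hr.
have := hmin (T' v hs).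
rewrite /costLc (costL_T' v hs).
have -> : nst (T' v hs) = (nst T).+1 by [].
rewrite sqdist_pt1 sqdist_pt2 -/D -addn1 natrD.
move=> h.
have h2 : 0 <= f * (((2^-1 + s) ^+ 2 + (2^-1 - s) ^+ 2 - 1) * D) + c.
  move: h; set L := costL T; set M := (nst T)%:R.
  have -> : f * ((2^-1 + s) ^+ 2 * D + (2^-1 - s) ^+ 2 * D - D) = f * (((2^-1 + s) ^+ 2 + (2^-1 - s) ^+ 2 - 1) * D) by ring.
  lra.
have e : f * (((2^-1 + s) ^+ 2 + (2^-1 - s) ^+ 2 - 1) * D) = 2 * (q * s ^+ 2) - q / 2
  by rewrite /q; field.
rewrite e in h2.
have r1 : r < 1 by nra.
have hs2 : s ^+ 2 < r by nra.
have hp : 0 < q * (r - s ^+ 2) by rewrite mulr_gt0 // subr_gt0.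
nra.
Qed.
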